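(* Let $k\ge 1$ and let $L_i(m)=a_im+b_i$ ($i=1,\dots,k$) be an admissible $k$-tuple of linear forms. Suppose that for certain pairs $i\neq j$ there are relations $|c_{i,j}L_i-c_{j,i}L_j|=n_{i,j}$ with positive integers $c_{i,j},c_{j,i},n_{i,j}$. Let $r_1,\dots,r_k$ be positive integers such that $\gcd(r_i,a_i)=1$ for all $i$, and $\gcd(r_i,\det(L_i,L_j))=\gcd(r_i,r_j)=1$ whenever $i\neq j$. Then there is an admissible $k$-tuple of linear forms $K_1,\dots,K_k$ satisfying, for each of those pairs, the relations $|c_{i,j}r_iK_i-c_{j,i}r_jK_j|=n_{i,j}$.
   Context: A linear form is a polynomial $L(m)=am+b$ with $a,b\in\mathbb{Z}$ and $a>0$ (viewed both as a polynomial and as a function of $m$). For linear forms $L(m)=am+b$ and $K(m)=cm+d$, a relation between them is an identity of polynomials $|c_L L-c_K K|=n$ (i.e. $c_LL-c_KK$ is the constant polynomial $\pm n$) with $c_L,c_K,n$ positive integers; $c_L,c_K$ are the relation coefficients and $n$ the relation value. The determinant is $\det(L,K)=|ad-bc|$. For a prime $p$, a $k$-tuple $L_1,\dots,L_k$ is $p$-admissible if there is an integer $t_p$ with $L_1(t_p)\cdots L_k(t_p)\not\equiv 0 \pmod p$; it is admissible if it is $p$-admissible for every prime $p$. *)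

(* Defs.v *)
From HB Require Import structures.
From mathcomp Require Import all_boot all_order all_algebra.
Set Implicit Arguments. Unset Strict Implicit. Unset Printing Implicit Defensive.
Import Order.TTheory GRing.Theory Num.Theory.
Local Open Scope ring_scope.

Definition lf (a b : int) : {poly int} := a *: 'X + b%:P.

Definition lf_relation (cL cK n : int) (L K : {poly int}) : Prop :=
  [/\ 0 < cL, 0 < cK, 0 < n &
      (cL *: L - cK *: K = n%:P \/ cL *: L - cK *: K = (- n)%:P)].

Definition lf_det (a b c d : int) : int := `|a * d - b * c|.

Definition p_admissible (k p : nat) (a b : 'I_k -> int) : Prop :=
  exists t : int, ~~ (p%:Z %| \prod_(i < k) (lf (a i) (b i)).[t])%Z.

Definition admissible (k : nat) (a b : 'I_k -> int) : Prop :=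
  forall p : nat, prime p -> p_admissible p a b.

(* Main.v *)
Require Import Defs.
From HB Require Import structures.
From mathcomp Require Import all_boot all_order all_algebra.
From mathcomp Require Import zify ring.
Import Order.TTheory GRing.Theory Num.Theory.
Local Open Scope ring_scope.

Lemma lf_horner (a b x : int) : (lf a b).[x] = a * x + b.
Proof. by rewrite /lf !hornerE. Qed.

Lemma lf_comb (cL cK a b c d : int) :
  cL *: lf a b - cK *: lf c d = (cL * a - cK * c) *: 'X + (cL * b - cK * d)%:P.
Proof.
apply/polyP => [[|[|s]]]; rewrite /lf !(coefD, coefB, coefN, coefZ, coefX, coefC) /=; lia.
Qed.

Lemma XC_eq (u v w : int) : u *: 'X + v%:P = w%:P <-> u = 0 /\ v = w.
Proof.
split.
  move=> E; split.
    by have := congr1 (fun q : {poly int} => q`_1) E;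
       rewrite !(coefD, coefZ, coefX, coefC) /= mulr1 addr0.
  by have := congr1 (fun q : {poly int} => q`_0) E;
     rewrite !(coefD, coefZ, coefX, coefC) /= mulr0 add0r.
by case=> -> ->; rewrite scale0r add0r.
Qed.

Lemma lf_rel_iff cL cK n a b c d :
  lf_relation cL cK n (lf a b) (lf c d) <->
  [/\ 0 < cL, 0 < cK, 0 < n, cL * a = cK * c &
      (cL * b - cK * d = n \/ cL * b - cK * d = - n)].
Proof.
rewrite /lf_relation lf_comb.
split.
  case=> h1 h2 h3 [/XC_eq [E1 E2]|/XC_eq [E1 E2]]; split => //; lia.
case=> h1 h2 h3 E1 [E2|E2]; split => //; [left|right]; apply/XC_eq; split => //; lia.
Qed.

Lemma poly_diff_dvd (F : {poly int}) (x y : int) : (x - y %| F.[x] - F.[y])%Z.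
Proof.
have : root (F - (F.[y])%:P) y by rewrite /root !hornerE subrr.
case/factor_theorem => q E.
have -> : F.[x] - F.[y] = (F - (F.[y])%:P).[x] by rewrite !hornerE.
by rewrite E !hornerE dvdz_mull // dvdzz.
Qed.

Lemma prime_coprimez (p : nat) (x : int) :
  prime p -> coprimez p%:Z x = ~~ (p%:Z %| x)%Z.
Proof. by move=> pp; rewrite coprimezE dvdzE absz_nat prime_coprime. Qed.

Lemma prime_gcd1 (p : nat) (x y : int) :
  prime p -> (p%:Z %| x)%Z -> (p%:Z %| y)%Z -> gcdz x y = 1 -> False.
Proof.
move=> pp hx hy g.
have : (p%:Z %| gcdz x y)%Z by rewrite dvdz_gcd hx hy.
rewrite g dvdz1 absz_nat => /eqP p1.
by move: pp; rewrite p1.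
Qed.

Arguments prime_gcd1 {p x y}.

Lemma absz_normz (x : int) : absz `|x| = absz x.
Proof. by rewrite -abszE absz_nat. Qed.

Lemma prime_prod (p : nat) (k : nat) (P : pred 'I_k) (F : 'I_k -> int) :
  prime p -> (forall i, P i -> ~~ (p%:Z %| F i)%Z) ->
  ~~ (p%:Z %| \prod_(i < k | P i) F i)%Z.
Proof.
move=> pp h; rewrite -prime_coprimez //.
apply: (big_ind (fun x => coprimez p%:Z x)).
- by rewrite /coprimez gcdz1.
- by move=> x y hx hy; rewrite coprimezMr hx hy.
- by move=> i Pi; rewrite prime_coprimez // h.
Qed.

Theorem theorem2p2 (k : nat) (hk : (1 <= k)%N)
  (a b : 'I_k -> int) (ha : forall i, 0 < a i) (hadm : admissible a b)
  (P : 'I_k -> 'I_k -> bool) (hP : forall i j, P i j -> i != j)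
  (c n : 'I_k -> 'I_k -> int)
  (hrel : forall i j, P i j ->
     lf_relation (c i j) (c j i) (n i j) (lf (a i) (b i)) (lf (a j) (b j)))
  (r : 'I_k -> int) (hr : forall i, 0 < r i)
  (hra : forall i, gcdz (r i) (a i) = 1)
  (hrdet : forall i j, i != j -> gcdz (r i) (lf_det (a i) (b i) (a j) (b j)) = 1)
  (hrr : forall i j, i != j -> gcdz (r i) (r j) = 1) :
  exists a' b' : 'I_k -> int,
    (forall i, 0 < a' i) /\ admissible a' b' /\
    (forall i, forall j, P i j ->
       lf_relation (c i j * r i) (c j i * r j) (n i j)
                   (lf (a' i) (b' i)) (lf (a' j) (b' j))).
Proof.
pose R := \prod_(j < k) r j.
pose Q i := \prod_(j < k | j != i) r j.
have HRQ i : R = r i * Q i by rewrite /R (bigD1 i).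
have Hcop i : coprimez (r i) (Q i).
  apply: (big_ind (fun x => coprimez (r i) x)).
  - by rewrite /coprimez gcdz1.
  - by move=> x y hx hy; rewrite coprimezMr hx hy.
  - by move=> j hj; apply/eqP; apply: hrr; rewrite eq_sym.
have Hcop2 i : coprimez (a i * Q i) (r i).
  rewrite coprimezMl; apply/andP; split; rewrite coprimez_sym ?Hcop //.
  by apply/eqP; apply: hra.
pose w i := projT1 (Bezoutz (a i * Q i) (r i)).
have Hw i : (r i %| a i * Q i * w i - 1)%Z.
  rewrite /w; case: (Bezoutz (a i * Q i) (r i)) => u [v E] /=.
  move: E; rewrite (eqP (Hcop2 i)) => E.
  have -> : a i * Q i * u - 1 = - (v * r i) by rewrite -E; ring.
  by rewrite rpredN dvdz_mull // dvdzz.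
pose t := - \sum_(j < k) b j * Q j * w j.
have Ht i : (r i %| a i * t + b i)%Z.
  rewrite /t (bigD1 i) //= mulrN mulrDr mulr_sumr.
  set S := \sum_(j < k | j != i) _.
  have -> : - (a i * (b i * Q i * w i) + S) + b i
            = - (b i * (a i * Q i * w i - 1)) - S by ring.
  rewrite rpredB // ?rpredN ?dvdz_mull //.
  apply: rpred_sum => j hj.
  apply: dvdz_mull; apply: dvdz_mulr; apply: dvdz_mull.
  by rewrite /Q (bigD1 i) 1?eq_sym //= dvdz_mulr // dvdzz.
pose a' i := a i * Q i.
pose b' i := ((a i * t + b i) %/ r i)%Z.
have Hb' i : r i * b' i = a i * t + b i by rewrite mulrC divzK.
have Ha' i : r i * a' i = a i * R by rewrite (HRQ i) /a'; ring.
have HQpos i : 0 < Q i by apply: prodr_gt0 => j _; apply: hr.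
exists a', b'; split; [|split].
- by move=> i; rewrite /a' mulr_gt0.
- move=> p pp; rewrite /p_admissible.
  pose F := \prod_(i < k) lf (a i) (b i).
  have Hprod m : R * \prod_(i < k) (lf (a' i) (b' i)).[m] = F.[R * m + t].
    rewrite /F horner_prod /R -big_split /=; apply: eq_bigr => i _.
    rewrite !lf_horner.
    have -> : r i * (a' i * m + b' i) = r i * a' i * m + r i * b' i by ring.
    rewrite Ha' Hb' /R; ring.
  case: (boolP [exists i, (p%:Z %| r i)%Z]).
  + case/existsP => i0 hi0.
    have hother j : j != i0 -> ~~ (p%:Z %| r j)%Z.
      move=> hj; apply/negP => hd.
      have hij : i0 != j by rewrite eq_sym.
      exact: (prime_gcd1 pp hi0 hd (hrr i0 j hij)).
    have hpR : (p%:Z %| R)%Z by rewrite (HRQ i0) dvdz_mulr.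
    have hLi0 : (p%:Z %| a i0 * t + b i0)%Z := dvdz_trans hi0 (Ht i0).
    have hnot j m : j != i0 -> ~~ (p%:Z %| a' j * m + b' j)%Z.
      move=> hj; apply/negP => hd.
      have h1 : (p%:Z %| a j * t + b j)%Z.
        have -> : a j * t + b j = r j * (a' j * m + b' j) - a j * R * m.
          have -> : r j * (a' j * m + b' j) = r j * a' j * m + r j * b' j by ring.
          rewrite Ha' Hb'; ring.
        by apply: rpredB; [exact: dvdz_mull | apply: dvdz_mulr; exact: dvdz_mull].
      have hij : i0 != j by rewrite eq_sym.
      apply: (prime_gcd1 pp hi0 _ (hrdet i0 j hij)).
      rewrite /lf_det dvdzE absz_normz -dvdzE.
      have -> : a i0 * b j - b i0 * a j
          = a i0 * (a j * t + b j) - a j * (a i0 * t + b i0) by ring.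
      by rewrite rpredB // dvdz_mull.
    have hcopa : coprimez p%:Z (a' i0).
      rewrite coprimezMr; apply/andP; split.
        rewrite prime_coprimez //; apply/negP => h.
        exact: (prime_gcd1 pp hi0 h (hra i0)).
      apply: (big_ind (fun x => coprimez p%:Z x)).
      * by rewrite /coprimez gcdz1.
      * by move=> x y hx hy; rewrite coprimezMr hx hy.
      * by move=> j hj; rewrite prime_coprimez // hother.
    exists (if (p%:Z %| b' i0)%Z then 1 else 0).
    rewrite (eq_bigr (fun i => a' i * (if (p%:Z %| b' i0)%Z then 1 else 0) + b' i));
      last by move=> i _; rewrite lf_horner.
    apply: prime_prod => // i _.
    case: (eqVneq i i0) => [->|hi]; last exact: hnot.
    case: ifP => hb.
      rewrite mulr1; apply/negP => h.
      have : (p%:Z %| a' i0)%Z.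
        by rewrite -(addrK (b' i0) (a' i0)) rpredB.
      by apply/negP; rewrite -prime_coprimez.
    by rewrite mulr0 add0r hb.
  + move=> hno.
    have hall i : ~~ (p%:Z %| r i)%Z.
      by apply/negP => h; apply: (negP hno); apply/existsP; exists i.
    have hcR : coprimez R p%:Z.
      by rewrite coprimez_sym prime_coprimez //; apply: prime_prod => // i _.
    case: (hadm p pp) => tp htp.
    case: (Bezoutz R p%:Z) => u [v E]; rewrite (eqP hcR) in E.
    exists ((tp - t) * u); apply/negP => hd.
    have h1 : (p%:Z %| F.[R * ((tp - t) * u) + t])%Z by rewrite -Hprod dvdz_mull.
    have h2 : (p%:Z %| R * ((tp - t) * u) + t - tp)%Z.
      have -> : R * ((tp - t) * u) + t - tp = (tp - t) * (u * R - 1) by ring.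
      have -> : u * R - 1 = - (v * p%:Z) by rewrite -E; ring.
      by rewrite dvdz_mull // rpredN dvdz_mull // dvdzz.
    have h3 := dvdz_trans h2 (poly_diff_dvd F (R * ((tp - t) * u) + t) tp).
    move: htp; rewrite -horner_prod -/F => /negP; apply.
    set x := R * ((tp - t) * u) + t in h1 h3.
    have -> : F.[tp] = F.[x] - (F.[x] - F.[tp]) by ring.
    by rewrite rpredB.
- move=> i j hij; have := hrel i j hij; rewrite !lf_rel_iff.
  case=> h1 h2 h3 E1 E2; split.
  + by rewrite mulr_gt0.
  + by rewrite mulr_gt0.
  + done.
  + by rewrite -!mulrA Ha' Ha' !mulrA E1.
  + rewrite -!mulrA Hb' Hb'.
    have -> : c i j * (a i * t + b i) - c j i * (a j * t + b j)
       = (c i j * a i - c j i * a j) * t + (c i j * b i - c j i * b j) by ring.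
    by rewrite E1 subrr mul0r add0r.
Qed.
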